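(* For every set $X$, $\mathrm{Aut}(\mathcal{PI}^{\ast}_X)\cong\mathcal{S}_X$. Moreover, for every automorphism $\varphi$ of $\mathcal{PI}^{\ast}_X$ there is $\pi\in\mathcal{S}_X$ such that $\varphi(a)=\pi^{-1}\star a\star\pi$ for all $a\in\mathcal{PI}^{\ast}_X$.
   Context: Let $X'=\{x':x\in X\}$ be a disjoint copy of $X$. $\mathcal{PI}^{\ast}_X$ is the set of partitions of $X\cup X'$ each of whose blocks is a singleton (point) or a generalised line (a set meeting both $X$ and $X'$), with product $\star$: with $X''$ a third copy of $X$, regard $\alpha$ as a partition of $X\cup X''$ and $\beta$ as a partition of $X''\cup X'$, let $\sim$ be the equivalence on $X\cup X''\cup X'$ generated by the blocks of both; $\alpha\star\beta$ is the partition of $X\cup X'$ in which distinct $u,v$ are in one block iff $u\sim v$ and the $\sim$-class of $u$ contains no singleton block of $\alpha$ or $\beta$. $\mathcal{S}_X$ is its group of units: elements all of whose blocks are $\{x,\pi(x)'\}$ for a permutation $\pi$ of $X$ (identified with the symmetric group on $X$). $\mathrm{Aut}$ denotes the automorphism group. *)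

(* Defs.v *)
(* Partitions of X ∪ X' are modelled as equivalence relations
   on the type X + X  (inl x = x, inr x = x'). *)
From Stdlib Require Import Relations.

Set Implicit Arguments.

Definition Rel (X : Type) := X + X -> X + X -> Prop.

Definition singleton_block (X : Type) (a : Rel X) (u : X + X) : Prop :=
  forall v, a u v -> v = u.

Definition PIstar (X : Type) (a : Rel X) : Prop :=
  equivalence (X + X) a /\
  forall u, singleton_block a u \/
            ((exists x, a u (inl x)) /\ (exists y, a u (inr y))).

(* X ∪ X'' ∪ X'  is  X + (X + X) : inl x = x, inr (inl x) = x'', inr (inr x) = x' *)
Definition emb_l (X : Type) (u : X + X) : X + (X + X) :=
  match u with inl x => inl x | inr x => inr (inl x) end.
Definition emb_r (X : Type) (u : X + X) : X + (X + X) :=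
  match u with inl x => inr (inl x) | inr x => inr (inr x) end.
Definition emb_o (X : Type) (u : X + X) : X + (X + X) :=
  match u with inl x => inl x | inr x => inr (inr x) end.

Definition step (X : Type) (a b : Rel X) (p q : X + (X + X)) : Prop :=
  (exists u v, p = emb_l u /\ q = emb_l v /\ a u v) \/
  (exists u v, p = emb_r u /\ q = emb_r v /\ b u v).

Definition gen (X : Type) (a b : Rel X) : X + (X + X) -> X + (X + X) -> Prop :=
  clos_refl_sym_trans _ (step a b).

Definition sing_point (X : Type) (a b : Rel X) (w : X + (X + X)) : Prop :=
  (exists s, w = emb_l s /\ singleton_block a s) \/
  (exists s, w = emb_r s /\ singleton_block b s).

Definition star (X : Type) (a b : Rel X) : Rel X :=
  fun u v => u = v \/
    (gen a b (emb_o u) (emb_o v) /\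
     forall w, gen a b (emb_o u) w -> ~ sing_point a b w).

Definition perm_rel (X : Type) (f : X -> X) : Rel X :=
  fun u v => u = v \/
    (exists x, (u = inl x /\ v = inr (f x)) \/ (u = inr (f x) /\ v = inl x)).

Definition in_SX (X : Type) (r : Rel X) : Prop :=
  exists f g : X -> X,
    (forall x, g (f x) = x) /\ (forall x, f (g x) = x) /\ r = perm_rel f.

(* automorphisms of (PI*_X, star); maps are compared on PI*_X only *)
Definition is_aut (X : Type) (phi : Rel X -> Rel X) : Prop :=
  (forall a, PIstar a -> PIstar (phi a)) /\
  (forall a b, PIstar a -> PIstar b -> phi a = phi b -> a = b) /\
  (forall b, PIstar b -> exists a, PIstar a /\ phi a = b) /\
  (forall a b, PIstar a -> PIstar b -> phi (star a b) = star (phi a) (phi b)).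

Definition agree_on_PI (X : Type) (phi psi : Rel X -> Rel X) : Prop :=
  forall a, PIstar a -> phi a = psi a.

(* Main.v *)
Require Import Defs.
From Stdlib Require Import Relations Classical ClassicalEpsilon FunctionalExtensionality PropExtensionality.


Lemma pred_ext {T : Type} (P Q : T -> Prop) : (forall x, P x <-> Q x) -> P = Q.
Proof. intros H; apply functional_extensionality; intros x; apply propositional_extensionality; auto. Qed.

Lemma rel_ext {X : Type} (a b : Rel X) : (forall u v, a u v <-> b u v) -> a = b.
Proof.
  intros H; apply functional_extensionality; intros u; apply functional_extensionality; intros v;
  apply propositional_extensionality; auto.
Qed.

Definition Zr {X : Type} : Rel X := fun u v => u = v.
Definition inB {X : Type} (A C : X -> Prop) (u : X + X) : Prop :=
  match u with inl x => A x | inr y => C y end.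
Definition Bk {X : Type} (A C : X -> Prop) : Rel X :=
  fun u v => u = v \/ (inB A C u /\ inB A C v).
Definition ne {X : Type} (A : X -> Prop) := exists x, A x.
Definition valid {X : Type} (z : Rel X) (C : X -> Prop) : Prop :=
  ne C /\ forall y, C y -> (exists x, z (inr y) (inl x)) /\ (forall y2, z (inr y) (inr y2) -> C y2).
Definition Aof {X : Type} (z : Rel X) (C : X -> Prop) : X -> Prop :=
  fun x => exists y, C y /\ z (inl x) (inr y).
Definition clean {X : Type} (a b : Rel X) p := forall w, gen a b p w -> ~ sing_point a b w.

Lemma PI_refl {X} (a : Rel X) : PIstar a -> forall u, a u u.
Proof. intros [[R T SS] _]; exact R. Qed.
Lemma PI_sym {X} (a : Rel X) : PIstar a -> forall u v, a u v -> a v u.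
Proof. intros [[R T SS] _]; exact SS. Qed.
Lemma PI_trans {X} (a : Rel X) : PIstar a -> forall u v w, a u v -> a v w -> a u w.
Proof. intros [[R T SS] _]; exact T. Qed.
Lemma PI_meet {X} (a : Rel X) : PIstar a -> forall u, ~ singleton_block a u ->
  (exists x, a u (inl x)) /\ (exists y, a u (inr y)).
Proof. intros [_ H] u N; destruct (H u); tauto. Qed.
Lemma PI_meet2 {X} (a : Rel X) : PIstar a -> forall u v, a u v -> u <> v ->
  (exists x, a u (inl x)) /\ (exists y, a u (inr y)).
Proof. intros H u v Huv N; apply (PI_meet a H); intros SS; apply N; symmetry; apply SS; auto. Qed.

Lemma gen_step {X} (a b : Rel X) p q : step a b p q -> gen a b p q.
Proof. apply rst_step. Qed.
Lemma gen_sym {X} (a b : Rel X) p q : gen a b p q -> gen a b q p.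
Proof. apply rst_sym. Qed.
Lemma gen_trans {X} (a b : Rel X) p q r : gen a b p q -> gen a b q r -> gen a b p r.
Proof. apply rst_trans. Qed.
Lemma gen_refl {X} (a b : Rel X) p : gen a b p p.
Proof. apply rst_refl. Qed.
Lemma gen_l {X} (a b : Rel X) u v : a u v -> gen a b (emb_l u) (emb_l v).
Proof. intros; apply gen_step; left; eauto. Qed.
Lemma gen_r {X} (a b : Rel X) u v : b u v -> gen a b (emb_r u) (emb_r v).
Proof. intros; apply gen_step; right; eauto. Qed.

Lemma gen_inv {X} (a b : Rel X) (K : X + (X + X) -> Prop) :
  (forall p q, step a b p q -> K p -> K q) ->
  (forall p q, step a b p q -> K q -> K p) ->
  forall p q, gen a b p q -> (K p <-> K q).
Proof.
  intros H1 H2 p q G; induction G.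
  - split; [apply H1|apply H2]; auto.
  - tauto.
  - tauto.
  - tauto.
Qed.

Lemma gen_map {X} (a b : Rel X) {T} (R : T -> T -> Prop) (M : X + (X + X) -> T) :
  (forall x, R x x) -> (forall x y, R x y -> R y x) -> (forall x y z, R x y -> R y z -> R x z) ->
  (forall p q, step a b p q -> R (M p) (M q)) -> forall p q, gen a b p q -> R (M p) (M q).
Proof. intros Hr Hs Ht H p q G; induction G; eauto. Qed.

Lemma clean_gen {X} (a b : Rel X) p q : clean a b p -> gen a b p q -> clean a b q.
Proof. intros C G w G2; apply C; eapply gen_trans; eauto. Qed.

Lemma star_refl {X} (a b : Rel X) u : star a b u u.
Proof. left; auto. Qed.
Lemma star_sym {X} (a b : Rel X) u v : star a b u v -> star a b v u.
Proof.
  intros [E|[G C]]; [left; auto|right; split; [apply gen_sym; auto|]].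
  intros w G2; apply C; eapply gen_trans; eauto.
Qed.
Lemma star_trans {X} (a b : Rel X) u v w : star a b u v -> star a b v w -> star a b u w.
Proof.
  intros [E|[G C]] H2; [subst; auto|].
  destruct H2 as [E|[G2 C2]]; [subst; right; auto|right; split; eauto using gen_trans].
Qed.

Lemma star_clean {X} (a b : Rel X) u v : star a b u v -> u <> v -> clean a b (emb_o u).
Proof. intros [E|[G C]] N; [contradiction|exact C]. Qed.

Lemma star_intro {X} (a b : Rel X) u v : gen a b (emb_o u) (emb_o v) -> clean a b (emb_o u) -> star a b u v.
Proof. intros; right; split; auto. Qed.

Lemma clean_l {X} (a b : Rel X) p s : clean a b p -> gen a b p (emb_l s) -> ~ singleton_block a s.
Proof. intros C G SS; apply (C _ G); left; eauto. Qed.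
Lemma clean_r {X} (a b : Rel X) p s : clean a b p -> gen a b p (emb_r s) -> ~ singleton_block b s.
Proof. intros C G SS; apply (C _ G); right; eauto. Qed.

Lemma not_single_ex {X} (a : Rel X) u : ~ singleton_block a u -> exists v, a u v /\ v <> u.
Proof.
  intros N; apply NNPP; intros H; apply N; intros v Hv; apply NNPP; intros H2; apply H; eauto.
Qed.

Lemma star_PI {X} (a b : Rel X) : PIstar a -> PIstar b -> PIstar (star a b).
Proof.
  intros Ha Hb; split.
  - split; [intros u; apply star_refl| intros u v w; apply star_trans | intros u v; apply star_sym].
  - intros u; destruct (classic (singleton_block (star a b) u)) as [SS|NS]; [left; auto|right].
    destruct (not_single_ex _ _ NS) as [v [Huv Nv]].
    assert (C : clean a b (emb_o u)) by (eapply star_clean; eauto).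
    destruct u as [x|y].
    + split; [exists x; apply star_refl|].
      assert (N1 : ~ singleton_block a (inl x)) by (apply (clean_l a b (emb_o (inl x))); auto; apply gen_refl).
      destruct (PI_meet a Ha _ N1) as [_ [m Hm]].
      assert (G1 : gen a b (emb_o (inl x)) (emb_l (inr m))) by (apply (gen_l a b (inl x) (inr m)); auto).
      assert (N2 : ~ singleton_block b (inl m)) by (apply (clean_r a b (emb_o (inl x))); auto).
      destruct (PI_meet b Hb _ N2) as [_ [y Hy]].
      exists y; apply star_intro; auto.
      eapply gen_trans; [exact G1|]. apply (gen_r a b (inl m) (inr y)); auto.
    + split; [|exists y; apply star_refl].
      assert (N1 : ~ singleton_block b (inr y)) by (apply (clean_r a b (emb_o (inr y))); auto; apply gen_refl).
      destruct (PI_meet b Hb _ N1) as [[m Hm] _].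
      assert (G1 : gen a b (emb_o (inr y)) (emb_r (inl m))) by (apply (gen_r a b (inr y) (inl m)); auto).
      assert (N2 : ~ singleton_block a (inr m)) by (apply (clean_l a b (emb_o (inr y))); auto).
      destruct (PI_meet a Ha _ N2) as [[x Hx] _].
      exists x; apply star_intro; auto.
      eapply gen_trans; [exact G1|]. apply (gen_l a b (inr m) (inl x)); auto.
Qed.


Lemma step_sym {X} (a b : Rel X) p q : (forall u v, a u v -> a v u) -> (forall u v, b u v -> b v u) ->
  step a b p q -> step a b q p.
Proof.
  intros Sa Sb [[u [v [E1 [E2 H]]]]|[u [v [E1 [E2 H]]]]]; [left|right]; exists v, u; auto.
Qed.

Lemma Bk_sym {X} (A C : X -> Prop) u v : Bk A C u v -> Bk A C v u.
Proof. intros [E|[H1 H2]]; [left; auto|right; auto]. Qed.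

Lemma Bk_single {X} (A C : X -> Prop) u : ~ inB A C u -> singleton_block (Bk A C) u.
Proof. intros N v [E|[H _]]; [auto|contradiction]. Qed.

Lemma Bk_PI {X} (A C : X -> Prop) : ne A -> ne C -> PIstar (Bk A C).
Proof.
  intros [a Ha] [c Hc]; split.
  - split.
    + intros u; left; auto.
    + intros u v w [E|[H1 H2]] [E2|[H3 H4]]; subst; try (left; reflexivity); right; auto.
    + intros u v; apply Bk_sym.
  - intros u; destruct (classic (inB A C u)) as [I|N]; [right|left; apply Bk_single; auto].
    split; [exists a|exists c]; right; split; auto.
Qed.

Lemma Zr_PI {X} : PIstar (@Zr X).
Proof.
  split; [split|].
  - intros u; reflexivity.
  - intros u v w H1 H2; unfold Zr in *; congruence.
  - intros u v H; unfold Zr in *; congruence.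
  - intros u; left; intros v H; unfold Zr in *; auto.
Qed.

Lemma clean_in {X} (z : Rel X) C D u : PIstar z -> clean z (Bk C D) (emb_o u) -> inB (Aof z C) D u.
Proof.
  intros Hz Cl; destruct u as [x|d]; simpl.
  - assert (N1 : ~ singleton_block z (inl x)) by (apply (clean_l z (Bk C D) (emb_o (inl x))); auto; apply gen_refl).
    destruct (PI_meet z Hz _ N1) as [_ [m Hm]].
    assert (N2 : ~ singleton_block (Bk C D) (inl m)).
    { apply (clean_r z (Bk C D) (emb_o (inl x))); auto. apply (gen_l z (Bk C D) (inl x) (inr m)); auto. }
    exists m; split; auto. apply NNPP; intros N; apply N2; apply Bk_single; auto.
  - assert (N2 : ~ singleton_block (Bk C D) (inr d)) by (apply (clean_r z (Bk C D) (emb_o (inr d))); auto; apply gen_refl).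
    apply NNPP; intros N; apply N2; apply Bk_single; auto.
Qed.

Definition KL1 {X} (z : Rel X) (C D : X -> Prop) (p : X + (X + X)) : Prop :=
  match p with inl x => Aof z C x | inr (inl y) => C y | inr (inr d) => D d end.

Lemma KL1_step {X} (z : Rel X) C D p q : PIstar z -> valid z C ->
  step z (Bk C D) p q -> KL1 z C D p -> KL1 z C D q.
Proof.
  intros Hz [_ V] [[u [v [-> [-> H]]]]|[u [v [-> [-> H]]]]].
  - destruct u as [x|y]; destruct v as [x2|y2]; simpl.
    + intros [y [Cy Hy]]; exists y; split; auto. eapply PI_trans; eauto. apply PI_sym; auto.
    + intros [y [Cy Hy]]. apply (proj2 (V y Cy)). eapply PI_trans; eauto. apply PI_sym; auto.
    + intros Cy; exists y; split; auto; apply PI_sym; auto.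
    + intros Cy; apply (proj2 (V y Cy)); auto.
  - destruct H as [E|[H1 H2]]; [subst; auto|].
    intros _; destruct v; simpl in *; auto.
Qed.

Lemma KL1_gen {X} (z : Rel X) C D p q : PIstar z -> valid z C ->
  gen z (Bk C D) p q -> KL1 z C D p -> KL1 z C D q.
Proof.
  intros Hz V G; apply (proj1 (gen_inv z (Bk C D) (KL1 z C D)
    (fun p0 q0 SS => KL1_step z C D p0 q0 Hz V SS)
    (fun p0 q0 SS => KL1_step z C D q0 p0 Hz V (step_sym _ _ _ _ (PI_sym z Hz) (Bk_sym C D) SS)) p q G)).
Qed.

Lemma KL1_clean {X} (z : Rel X) C D w : PIstar z -> valid z C -> ne D -> KL1 z C D w -> ~ sing_point z (Bk C D) w.
Proof.
  intros Hz [[c Hc] V] [d Hd] K [[s [-> SS]]|[s [-> SS]]].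
  - destruct s as [x|y]; simpl in K.
    + destruct K as [y [Cy Hy]]. specialize (SS _ Hy); discriminate.
    + destruct (proj1 (V y K)) as [x Hx]. specialize (SS _ Hx); discriminate.
  - destruct s as [y|e]; simpl in K.
    + assert (Bk C D (inl y) (inr d)) by (right; simpl; auto). specialize (SS _ H); discriminate.
    + assert (Bk C D (inr e) (inl c)) by (right; simpl; auto). specialize (SS _ H); discriminate.
Qed.

Lemma L1v {X} (z : Rel X) C D : PIstar z -> valid z C -> ne D -> star z (Bk C D) = Bk (Aof z C) D.
Proof.
  intros Hz V HD; apply rel_ext; intros u v; split.
  - intros H; destruct (classic (u = v)) as [E|N]; [left; auto|].
    assert (Cl : clean z (Bk C D) (emb_o u)) by (eapply star_clean; eauto).
    assert (Cl2 : clean z (Bk C D) (emb_o v)).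
    { apply star_sym in H. eapply star_clean; eauto. }
    right; split; apply clean_in; auto.
  - intros [E|[Iu Iv]]; [left; auto|].
    destruct (classic (u = v)) as [E|N]; [left; auto|].
    destruct V as [[c0 Hc0] V'].
    assert (anchor : forall w, inB (Aof z C) D w -> gen z (Bk C D) (emb_o w) (inr (inl c0))).
    { intros [x|d] Hw; simpl in Hw.
      - destruct Hw as [y [Cy Hy]].
        eapply gen_trans; [apply (gen_l z (Bk C D) (inl x) (inr y)); auto|].
        apply (gen_r z (Bk C D) (inl y) (inl c0)); right; simpl; auto.
      - apply (gen_r z (Bk C D) (inr d) (inl c0)); right; simpl; auto. }
    apply star_intro.
    + eapply gen_trans; [apply anchor; auto|]. apply gen_sym; apply anchor; auto.
    + intros w G. apply KL1_clean; auto. split; [exists c0|]; auto.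
      apply (KL1_gen z C D (emb_o u)); auto. split; [exists c0|]; auto.
      destruct u; simpl in *; auto.
Qed.

Lemma L1i {X} (z : Rel X) C D : PIstar z -> ~ valid z C -> ne C -> star z (Bk C D) = Zr.
Proof.
  intros Hz NV [c0 Hc0]; apply rel_ext; intros u v; split; [|intros E; left; auto].
  intros H; destruct (classic (u = v)) as [E|N]; [auto|exfalso].
  assert (Cl : clean z (Bk C D) (emb_o u)) by (eapply star_clean; eauto).
  assert (Iu := clean_in z C D u Hz Cl).
  assert (GC : forall c, C c -> gen z (Bk C D) (emb_o u) (inr (inl c))).
  { intros c Hc. destruct u as [x|d]; simpl in Iu.
    - destruct Iu as [y [Cy Hy]].
      eapply gen_trans; [apply (gen_l z (Bk C D) (inl x) (inr y)); auto|].
      apply (gen_r z (Bk C D) (inl y) (inl c)); right; simpl; auto.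
    - apply (gen_r z (Bk C D) (inr d) (inl c)); right; simpl; auto. }
  apply NV; split; [exists c0; auto|]. intros y Cy.
  split.
  - apply NNPP; intros NE.
    assert (SS : singleton_block z (inr y)).
    { destruct (classic (singleton_block z (inr y))) as [SS|SS]; auto.
      destruct (PI_meet z Hz _ SS) as [[x Hx] _]. exfalso; eauto. }
    apply (Cl (inr (inl y))); [apply GC; auto|]. left; exists (inr y); split; auto.
  - intros y2 H2. apply NNPP; intros N2.
    apply (Cl (inr (inl y2))).
    + eapply gen_trans; [apply (GC y Cy)|]. apply (gen_l z (Bk C D) (inr y) (inr y2)); auto.
    + right; exists (inl y2); split; auto. apply Bk_single; auto.
Qed.

Lemma star_Z_l {X} (a : Rel X) : PIstar a -> star Zr a = Zr.
Proof.
  intros Ha; apply rel_ext; intros u v; split; [|intros E; left; auto].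
  intros H; destruct (classic (u = v)) as [E|N]; [auto|exfalso].
  assert (Cl : clean Zr a (emb_o u)) by (eapply star_clean; eauto).
  destruct u as [x|y].
  - apply (clean_l Zr a (emb_o (inl x)) (inl x) Cl (gen_refl _ _ _)). intros w Hw; unfold Zr in Hw; auto.
  - assert (N1 : ~ singleton_block a (inr y)) by (apply (clean_r Zr a (emb_o (inr y))); auto; apply gen_refl).
    destruct (PI_meet a Ha _ N1) as [[m Hm] _].
    apply (clean_l Zr a (emb_o (inr y)) (inr m) Cl).
    + apply (gen_r Zr a (inr y) (inl m)); auto.
    + intros w Hw; unfold Zr in Hw; auto.
Qed.

Lemma star_Z_r {X} (a : Rel X) : PIstar a -> star a Zr = Zr.
Proof.
  intros Ha; apply rel_ext; intros u v; split; [|intros E; left; auto].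
  intros H; destruct (classic (u = v)) as [E|N]; [auto|exfalso].
  assert (Cl : clean a Zr (emb_o u)) by (eapply star_clean; eauto).
  destruct u as [x|y].
  - assert (N1 : ~ singleton_block a (inl x)) by (apply (clean_l a Zr (emb_o (inl x))); auto; apply gen_refl).
    destruct (PI_meet a Ha _ N1) as [_ [m Hm]].
    apply (clean_r a Zr (emb_o (inl x)) (inl m) Cl).
    + apply (gen_l a Zr (inl x) (inr m)); auto.
    + intros w Hw; unfold Zr in Hw; auto.
  - apply (clean_r a Zr (emb_o (inr y)) (inr y) Cl (gen_refl _ _ _)). intros w Hw; unfold Zr in Hw; auto.
Qed.


Lemma TL {X} (a b a' b' : Rel X) (M Minv : X + (X + X) -> X + (X + X)) (m : X + X -> X + X) :
  (forall p, M (Minv p) = p) -> (forall p, Minv (M p) = p) -> (forall u v, m u = m v -> u = v) ->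
  (forall p q, step a' b' p q <-> step a b (M p) (M q)) ->
  (forall p, sing_point a' b' p <-> sing_point a b (M p)) ->
  (forall u, M (emb_o u) = emb_o (m u)) ->
  forall u v, star a' b' u v <-> star a b (m u) (m v).
Proof.
  intros HMi HiM Hm H1 H2 H3.
  assert (G1 : forall p q, gen a' b' p q -> gen a b (M p) (M q)).
  { apply gen_map; [apply gen_refl|apply gen_sym|apply gen_trans|].
    intros p q SS; apply gen_step; apply H1; auto. }
  assert (G2 : forall p q, gen a b p q -> gen a' b' (Minv p) (Minv q)).
  { apply gen_map; [apply gen_refl|apply gen_sym|apply gen_trans|].
    intros p q SS; apply gen_step; apply H1; rewrite !HMi; auto. }
  intros u v; split.
  - intros [E|[G C]]; [left; subst; auto|right; split].
    + rewrite <- !H3; auto.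
    + intros w Gw Sw. apply (C (Minv w)).
      * rewrite <- (HiM (emb_o u)). apply G2. rewrite H3; auto.
      * apply H2; rewrite HMi; auto.
  - intros [E|[G C]]; [left; auto|right; split].
    + rewrite <- (HiM (emb_o u)), <- (HiM (emb_o v)). apply G2. rewrite !H3; auto.
    + intros w Gw Sw. apply (C (M w)).
      * rewrite <- H3. apply G1; auto.
      * apply H2; auto.
Qed.

Definition mp {X} (f : X -> X) (u : X + X) : X + X :=
  match u with inl x => inl (f x) | inr y => inr (f y) end.
Definition cnj {X} (f : X -> X) (a : Rel X) : Rel X := fun u v => a (mp f u) (mp f v).
Definition M3 {X} (f : X -> X) (p : X + (X + X)) : X + (X + X) :=
  match p with inl x => inl (f x) | inr (inl y) => inr (inl (f y)) | inr (inr y) => inr (inr (f y)) end.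

Lemma mp_inv {X} (f g : X -> X) u : (forall x, f (g x) = x) -> mp f (mp g u) = u.
Proof. intros H; destruct u; simpl; rewrite H; auto. Qed.
Lemma M3_inv {X} (f g : X -> X) p : (forall x, f (g x) = x) -> M3 f (M3 g p) = p.
Proof. intros H; destruct p as [|[|]]; simpl; rewrite H; auto. Qed.
Lemma M3_l {X} (f : X -> X) u : M3 f (emb_l u) = emb_l (mp f u).
Proof. destruct u; auto. Qed.
Lemma M3_r {X} (f : X -> X) u : M3 f (emb_r u) = emb_r (mp f u).
Proof. destruct u; auto. Qed.
Lemma M3_o {X} (f : X -> X) u : M3 f (emb_o u) = emb_o (mp f u).
Proof. destruct u; auto. Qed.

Lemma conj_star {X} (f g : X -> X) (a b : Rel X) :
  (forall x, g (f x) = x) -> (forall x, f (g x) = x) ->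
  star (cnj f a) (cnj f b) = cnj f (star a b).
Proof.
  intros Hgf Hfg. apply rel_ext; intros u v. unfold cnj at 3.
  apply (TL a b (cnj f a) (cnj f b) (M3 f) (M3 g) (mp f)).
  - intros; apply M3_inv; auto.
  - intros; apply M3_inv; auto.
  - intros u0 v0 E. rewrite <- (mp_inv g f u0), <- (mp_inv g f v0), E; auto.
  - intros p q; split.
    + intros [[u0 [v0 [-> [-> H]]]]|[u0 [v0 [-> [-> H]]]]]; [left|right]; exists (mp f u0), (mp f v0);
        rewrite ?M3_l, ?M3_r; auto.
    + intros [[u0 [v0 [E1 [E2 H]]]]|[u0 [v0 [E1 [E2 H]]]]]; [left|right]; exists (mp g u0), (mp g v0).
      * rewrite <- (M3_inv g f p), <- (M3_inv g f q), E1, E2, !M3_l by auto. unfold cnj; rewrite !mp_inv; auto.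
      * rewrite <- (M3_inv g f p), <- (M3_inv g f q), E1, E2, !M3_r by auto. unfold cnj; rewrite !mp_inv; auto.
  - intros p; split.
    + intros [[s [-> SS]]|[s [-> SS]]]; [left|right]; exists (mp f s); rewrite ?M3_l, ?M3_r; split; auto;
        intros w Hw; rewrite <- (mp_inv f g w) in Hw |- * by auto; f_equal; apply SS; auto.
      all: unfold cnj; rewrite mp_inv; auto.
    + intros [[s [E SS]]|[s [E SS]]]; [left|right]; exists (mp g s);
      (split; [rewrite <- (M3_inv g f p), E, ?M3_l, ?M3_r; auto|]);
      intros w Hw; unfold cnj in Hw; rewrite mp_inv in Hw by auto; apply SS in Hw;
      rewrite <- Hw, mp_inv; auto.
  - apply M3_o.
Qed.


Definition sw {X} (u : X + X) : X + X := match u with inl x => inr x | inr x => inl x end.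
Definition tr {X} (a : Rel X) : Rel X := fun u v => a (sw u) (sw v).
Definition Mt {X} (p : X + (X + X)) : X + (X + X) :=
  match p with inl x => inr (inr x) | inr (inl y) => inr (inl y) | inr (inr y) => inl y end.

Lemma sw_sw {X} (u : X + X) : sw (sw u) = u.
Proof. destruct u; auto. Qed.
Lemma Mt_Mt {X} (p : X + (X + X)) : Mt (Mt p) = p.
Proof. destruct p as [|[|]]; auto. Qed.
Lemma Mt_l {X} (u : X + X) : Mt (emb_l u) = emb_r (sw u).
Proof. destruct u; auto. Qed.
Lemma Mt_r {X} (u : X + X) : Mt (emb_r u) = emb_l (sw u).
Proof. destruct u; auto. Qed.
Lemma Mt_o {X} (u : X + X) : Mt (emb_o u) = emb_o (sw u).
Proof. destruct u; auto. Qed.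
Lemma tr_tr {X} (a : Rel X) : tr (tr a) = a.
Proof. apply rel_ext; intros u v; unfold tr; rewrite !sw_sw; tauto. Qed.

Lemma tr_star {X} (a b : Rel X) : star (tr b) (tr a) = tr (star a b).
Proof.
  apply rel_ext; intros u v. unfold tr at 3.
  apply (TL a b (tr b) (tr a) Mt Mt sw).
  - apply Mt_Mt.
  - apply Mt_Mt.
  - intros u0 v0 E. rewrite <- (sw_sw u0), <- (sw_sw v0), E; auto.
  - intros p q; split.
    + intros [[u0 [v0 [-> [-> H]]]]|[u0 [v0 [-> [-> H]]]]]; [right|left]; exists (sw u0), (sw v0);
        rewrite ?Mt_l, ?Mt_r; auto.
    + intros [[u0 [v0 [E1 [E2 H]]]]|[u0 [v0 [E1 [E2 H]]]]]; [right|left]; exists (sw u0), (sw v0).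
      * rewrite <- (Mt_Mt p), <- (Mt_Mt q), E1, E2, !Mt_l. unfold tr; rewrite !sw_sw; auto.
      * rewrite <- (Mt_Mt p), <- (Mt_Mt q), E1, E2, !Mt_r. unfold tr; rewrite !sw_sw; auto.
  - intros p; split.
    + intros [[s [-> SS]]|[s [-> SS]]]; [right|left]; exists (sw s); rewrite ?Mt_l, ?Mt_r; split; auto;
        intros w Hw; assert (E : sw w = s) by (apply SS; unfold tr; rewrite sw_sw; auto);
        subst; rewrite sw_sw; auto.
    + intros [[s [E SS]]|[s [E SS]]]; [right|left]; exists (sw s);
      (split; [rewrite <- (Mt_Mt p), E, ?Mt_l, ?Mt_r; auto|]);
      intros w Hw; unfold tr in Hw; rewrite sw_sw in Hw; apply SS in Hw;
      rewrite <- Hw, sw_sw; auto.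
  - apply Mt_o.
Qed.

Lemma tr_PI {X} (a : Rel X) : PIstar a -> PIstar (tr a).
Proof.
  intros Ha; split; [split|].
  - intros u; unfold tr; apply PI_refl; auto.
  - intros u v w; unfold tr; apply PI_trans; auto.
  - intros u v; unfold tr; apply PI_sym; auto.
  - intros u. destruct Ha as [_ H]. destruct (H (sw u)) as [SS|[[x Hx] [y Hy]]].
    + left; intros v Hv. unfold tr in Hv. apply SS in Hv. rewrite <- (sw_sw v), Hv, sw_sw; auto.
    + right; split; [exists y|exists x]; unfold tr; simpl; auto.
Qed.

Lemma tr_Bk {X} (A C : X -> Prop) : tr (Bk A C) = Bk C A.
Proof.
  apply rel_ext; intros u v; unfold tr, Bk; split.
  - intros [E|[H1 H2]]; [left; rewrite <- (sw_sw u), E, sw_sw; auto|right; destruct u, v; simpl in *; auto].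
  - intros [E|[H1 H2]]; [left; subst; auto|right; destruct u, v; simpl in *; auto].
Qed.

Lemma tr_Zr {X} : tr (@Zr X) = Zr.
Proof.
  apply rel_ext; intros u v; unfold tr, Zr; split; intros E; [rewrite <- (sw_sw u), E, sw_sw|subst]; auto.
Qed.

Lemma star_tr_l {X} (z : Rel X) Q C : star (Bk Q C) z = tr (star (tr z) (Bk C Q)).
Proof. rewrite <- tr_star, tr_Bk, !tr_tr; auto. Qed.

Lemma L2v {X} (z : Rel X) Q C : PIstar z -> valid (tr z) C -> ne Q -> star (Bk Q C) z = Bk Q (Aof (tr z) C).
Proof. intros Hz V HQ; rewrite star_tr_l, L1v, tr_Bk; auto; apply tr_PI; auto. Qed.

Lemma L2i {X} (z : Rel X) Q C : PIstar z -> ~ valid (tr z) C -> ne C -> star (Bk Q C) z = Zr.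
Proof. intros Hz V HC; rewrite star_tr_l, L1i, tr_Zr; auto; apply tr_PI; auto. Qed.

Definition lmap {X} (g : X -> X) (u : X + X) : X + X := match u with inl x => inl (g x) | inr y => inr y end.
Definition lconj {X} (g : X -> X) (a : Rel X) : Rel X := fun u v => a (lmap g u) (lmap g v).
Definition Mp {X} (g : X -> X) (p : X + (X + X)) : X + X :=
  match p with inl x => inl (g x) | inr (inl y) => inl y | inr (inr y) => inr y end.

Lemma L3l {X} (f g : X -> X) (a : Rel X) : (forall x, g (f x) = x) -> (forall x, f (g x) = x) ->
  PIstar a -> star (perm_rel g) a = lconj g a.
Proof.
  intros Hgf Hfg Ha.
  assert (G1 : forall p q, gen (perm_rel g) a p q -> a (Mp g p) (Mp g q)).
  { apply gen_map; [apply PI_refl; auto|apply PI_sym; auto|apply PI_trans; auto|].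
    intros p q [[u [v [-> [-> H]]]]|[u [v [-> [-> H]]]]].
    - destruct H as [E|[x [[-> ->]|[-> ->]]]]; [subst; apply PI_refl; auto| |]; simpl; apply PI_refl; auto.
    - destruct u, v; simpl; auto. }
  assert (G0 : forall p, gen (perm_rel g) a p (emb_r (Mp g p))).
  { intros [x|[y|y]]; simpl; try apply gen_refl.
    apply (gen_l (perm_rel g) a (inl x) (inr (g x))). right; exists x; left; auto. }
  assert (G2 : forall p q, a (Mp g p) (Mp g q) -> gen (perm_rel g) a p q).
  { intros p q H. eapply gen_trans; [apply G0|]. eapply gen_trans; [|apply gen_sym; apply G0].
    apply gen_r; auto. }
  assert (SP : forall w, sing_point (perm_rel g) a w -> exists s, w = emb_r s /\ singleton_block a s).
  { intros w [[s [-> SS]]|H]; auto. exfalso. destruct s as [x|y].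
    - assert (perm_rel g (inl x) (inr (g x))) by (right; exists x; left; auto).
      apply SS in H; discriminate.
    - assert (perm_rel g (inr y) (inl (f y))) by (right; exists (f y); right; rewrite Hgf; auto).
      apply SS in H; discriminate. }
  assert (MO : forall u, Mp g (emb_o u) = lmap g u) by (intros [|]; auto).
  assert (LI : forall u v, lmap g u = lmap g v -> u = v).
  { intros [x|y] [x2|y2]; simpl; intros E; inversion E; auto.
    rewrite <- (Hfg x), <- (Hfg x2), H0; auto. }
  assert (MR : forall s, Mp g (emb_r s) = s) by (intros [|]; auto).
  apply rel_ext; intros u v; split.
  - intros [E|[G C]]; [subst; unfold lconj; apply PI_refl; auto|]. unfold lconj. rewrite <- !MO; apply G1; auto.
  - intros H. destruct (classic (u = v)) as [E|N]; [left; auto|right; split].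
    + apply G2. rewrite !MO; auto.
    + intros w Gw Sw. apply SP in Sw. destruct Sw as [s [-> SS]].
      apply G1 in Gw. rewrite MO, MR in Gw.
      assert (E1 : s = lmap g u) by (symmetry; apply SS; apply PI_sym; auto).
      apply N, LI. unfold lconj in H.
      assert (a s (lmap g v)) by (rewrite E1; auto). apply SS in H0. congruence.
Qed.

Definition Pj {X} (f : X -> X) (u : X + X) : X := match u with inl x => x | inr y => f y end.

Lemma perm_char {X} (f g : X -> X) : (forall x, g (f x) = x) -> (forall x, f (g x) = x) ->
  forall u v, perm_rel g u v <-> Pj f u = Pj f v.
Proof.
  intros Hgf Hfg u v; split.
  - intros [E|[x [[-> ->]|[-> ->]]]]; subst; simpl; auto.
  - destruct u as [x|y], v as [x2|y2]; simpl; intros E.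
    + left; congruence.
    + right; exists x; left; subst; rewrite Hgf; auto.
    + right; exists x2; right; subst; rewrite Hgf; auto.
    + left; rewrite <- (Hgf y), <- (Hgf y2), E; auto.
Qed.

Lemma perm_PI {X} (f g : X -> X) : (forall x, g (f x) = x) -> (forall x, f (g x) = x) -> PIstar (perm_rel g).
Proof.
  intros Hgf Hfg. pose proof (perm_char f g Hgf Hfg) as PC. split; [split|].
  - intros u; left; auto.
  - intros u v w H1 H2; apply PC; apply PC in H1; apply PC in H2; congruence.
  - intros u v H1; apply PC; apply PC in H1; congruence.
  - intros [x|y]; right; split.
    + exists x; left; auto.
    + exists (g x); apply PC; simpl; auto.
    + exists (f y); apply PC; simpl; auto.
    + exists y; left; auto.
Qed.

Lemma tr_perm {X} (f g : X -> X) : (forall x, g (f x) = x) -> (forall x, f (g x) = x) ->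
  tr (perm_rel f) = perm_rel g.
Proof.
  intros Hgf Hfg. apply rel_ext; intros u v. unfold tr.
  rewrite (perm_char g f Hfg Hgf), (perm_char f g Hgf Hfg).
  assert (K : forall w, Pj g (sw w) = g (Pj f w)) by (intros [x|y]; simpl; auto).
  rewrite !K; split; intros E; [rewrite <- (Hfg (Pj f u)), <- (Hfg (Pj f v)), E|rewrite E]; auto.
Qed.

Lemma L3 {X} (f g : X -> X) (a : Rel X) : (forall x, g (f x) = x) -> (forall x, f (g x) = x) ->
  PIstar a -> star (star (perm_rel g) a) (perm_rel f) = cnj g a.
Proof.
  intros Hgf Hfg Ha.
  assert (Hc : PIstar (star (perm_rel g) a)) by (apply star_PI; auto; eapply perm_PI; eauto).
  rewrite (L3l f g a Hgf Hfg Ha) in *.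
  rewrite <- (tr_tr (lconj g a)), <- (tr_tr (perm_rel f)), tr_star, (tr_perm f g Hgf Hfg).
  rewrite (L3l f g); auto; [|apply tr_PI; auto].
  apply rel_ext; intros u v; unfold tr, lconj, cnj.
  destruct u, v; simpl; tauto.
Qed.

Lemma conj_PI {X} (f g : X -> X) (a : Rel X) : (forall x, g (f x) = x) -> (forall x, f (g x) = x) ->
  PIstar a -> PIstar (cnj f a).
Proof.
  intros Hgf Hfg Ha; split; [split|].
  - intros u; unfold cnj; apply PI_refl; auto.
  - intros u v w; unfold cnj; apply PI_trans; auto.
  - intros u v; unfold cnj; apply PI_sym; auto.
  - intros u. destruct Ha as [_ H]. destruct (H (mp f u)) as [SS|[[x Hx] [y Hy]]].
    + left; intros v Hv. unfold cnj in Hv. apply SS in Hv.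
      rewrite <- (mp_inv g f v), Hv, mp_inv; auto.
    + right; split; [exists (g x)|exists (g y)]; unfold cnj; simpl; rewrite Hfg; auto.
Qed.

Lemma conj_conj {X} (f g : X -> X) (a : Rel X) : (forall x, g (f x) = x) -> cnj f (cnj g a) = a.
Proof. intros H; apply rel_ext; intros u v; unfold cnj; rewrite !mp_inv; tauto. Qed.

Lemma conj_comp {X} (f h : X -> X) (a : Rel X) : cnj (fun x => h (f x)) a = cnj f (cnj h a).
Proof. apply rel_ext; intros u v; unfold cnj; destruct u, v; simpl; tauto. Qed.

Lemma inB_mp {X} (f : X -> X) A C u : inB A C (mp f u) = inB (fun x => A (f x)) (fun y => C (f y)) u.
Proof. destruct u; reflexivity. Qed.

Lemma conj_Bk {X} (f g : X -> X) A C : (forall x, g (f x) = x) ->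
  cnj f (Bk A C) = Bk (fun x => A (f x)) (fun y => C (f y)).
Proof.
  intros H; apply rel_ext; intros u v; unfold cnj, Bk; rewrite !inB_mp; split; intros [E|E]; auto.
  - left; rewrite <- (mp_inv g f u), E, mp_inv; auto.
  - left; subst; auto.
Qed.


Definition SS {X} (a : Rel X) := exists A C, ne A /\ ne C /\ a = Bk A C.
Definition Qp {X} (w : Rel X) := w <> Zr /\ forall b, PIstar b -> star (star w b) w = Zr \/ star (star w b) w = w.

Lemma inB_ne {X} (A C : X -> Prop) u : ne A -> ne C -> (inB A C u <-> exists v, v <> u /\ Bk A C u v).
Proof.
  intros [a Ha] [c Hc]; split.
  - intros I; destruct u as [x|y].
    + exists (inr c); split; [discriminate|right; simpl in *; auto].
    + exists (inl a); split; [discriminate|right; simpl in *; auto].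
  - intros [v [N [E|[I _]]]]; [congruence|auto].
Qed.

Lemma Bk_inj {X} (A C A' C' : X -> Prop) : ne A -> ne C -> ne A' -> ne C' -> Bk A C = Bk A' C' -> A = A' /\ C = C'.
Proof.
  intros HA HC HA' HC' E.
  assert (K : forall u, inB A C u <-> inB A' C' u).
  { intros u; rewrite (inB_ne A C u HA HC), (inB_ne A' C' u HA' HC'), E; tauto. }
  split; apply pred_ext; intros x; [apply (K (inl x))|apply (K (inr x))].
Qed.

Lemma Bk_neZ {X} (A C : X -> Prop) : ne A -> ne C -> Bk A C <> Zr.
Proof.
  intros [a Ha] [c Hc] E. assert (H : Bk A C (inl a) (inr c)) by (right; simpl; auto).
  rewrite E in H; discriminate.
Qed.

Lemma valid_Bk {X} (A C E : X -> Prop) : ne A -> valid (Bk A C) E -> E = C.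
Proof.
  intros [a Ha] [[y0 Hy0] V]; apply pred_ext; intros y; split.
  - intros Ey. destruct (proj1 (V y Ey)) as [x [Hx|[H1 H2]]]; [discriminate|auto].
  - intros Cy. destruct (proj1 (V y0 Hy0)) as [x [Hx|[H1 H2]]]; [discriminate|].
    apply (proj2 (V y0 Hy0)). right; simpl in *; auto.
Qed.

Lemma valid_Bk_self {X} (A C : X -> Prop) : ne A -> ne C -> valid (Bk A C) C.
Proof.
  intros [a Ha] HC; split; auto. intros y Cy; split.
  - exists a; right; simpl; auto.
  - intros y2 [E|[_ H]]; [inversion E; subst; auto|auto].
Qed.

Lemma Aof_Bk {X} (A C : X -> Prop) : ne C -> Aof (Bk A C) C = A.
Proof.
  intros [c Hc]; apply pred_ext; intros x; split.
  - intros [y [Cy [E|[H _]]]]; [discriminate|auto].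
  - intros Ax; exists c; split; auto; right; simpl; auto.
Qed.

Lemma star_BkBk {X} (A C D : X -> Prop) : ne A -> ne C -> ne D -> star (Bk A C) (Bk C D) = Bk A D.
Proof.
  intros; rewrite L1v, Aof_Bk; auto. apply Bk_PI; auto. apply valid_Bk_self; auto.
Qed.

Lemma star_nZ {X} (z : Rel X) C D : PIstar z -> ne C -> ne D -> star z (Bk C D) <> Zr ->
  valid z C /\ star z (Bk C D) = Bk (Aof z C) D.
Proof.
  intros Hz HC HD N. destruct (classic (valid z C)) as [V|V].
  - split; auto; apply L1v; auto.
  - exfalso; apply N, L1i; auto.
Qed.

Lemma S_PI {X} (a : Rel X) : SS a -> PIstar a.
Proof. intros [A [C [HA [HC ->]]]]; apply Bk_PI; auto. Qed.

Lemma S_Q {X} (w : Rel X) : SS w -> Qp w.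
Proof.
  intros [A [C [HA [HC ->]]]]; split; [apply Bk_neZ; auto|].
  intros b Hb. set (z := star (Bk A C) b).
  assert (Hz : PIstar z) by (apply star_PI; auto; apply Bk_PI; auto).
  assert (supp : forall x v, z (inl x) v -> v <> inl x -> A x).
  { intros x v H N. apply NNPP; intros NA.
    apply (clean_l (Bk A C) b (emb_o (inl x)) (inl x)); [eapply star_clean; eauto|apply gen_refl|].
    apply Bk_single; auto. }
  destruct (classic (valid z A)) as [V|V]; [right|left; apply L1i; auto].
  rewrite L1v; auto. f_equal. apply pred_ext; intros x; split.
  - intros [y [Ay Hy]]. eapply supp; eauto; discriminate.
  - intros Ax. destruct V as [[y0 Hy0] V]. destruct (proj1 (V y0 Hy0)) as [x0 Hx0].
    apply (PI_sym z Hz) in Hx0.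
    assert (A0 : A x0) by (eapply supp; eauto; discriminate).
    assert (H1 : z (inl x0) (inl x)).
    { apply star_intro.
      - apply (gen_l (Bk A C) b (inl x0) (inl x)); right; simpl; auto.
      - eapply star_clean; [exact Hx0|discriminate]. }
    exists y0; split; auto. eapply PI_trans; eauto. apply PI_sym; auto.
Qed.

Lemma nZ_ex {X} (w : Rel X) : PIstar w -> w <> Zr -> exists x y, w (inl x) (inr y).
Proof.
  intros Hw N. assert (E : exists u v, w u v /\ u <> v).
  { apply NNPP; intros H; apply N; apply rel_ext; intros u v; split.
    - intros H1; apply NNPP; intros H2; apply H; eauto.
    - intros E; unfold Zr in E; subst; apply PI_refl; auto. }
  destruct E as [u [v [H1 H2]]]. destruct (PI_meet2 w Hw u v H1 H2) as [[x Hx] [y Hy]].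
  exists x, y. eapply PI_trans; eauto. apply PI_sym; auto.
Qed.

Lemma Q_S {X} (w : Rel X) : PIstar w -> Qp w -> SS w.
Proof.
  intros Hw [N Q]. destruct (nZ_ex w Hw N) as [x0 [y0 H0]].
  set (A0 := fun x => w (inl x0) (inl x)). set (C0 := fun y => w (inl x0) (inr y)).
  assert (HA : ne A0) by (exists x0; unfold A0; apply (PI_refl w Hw)).
  assert (HC : ne C0) by (exists y0; unfold C0; auto).
  assert (V1 : valid w C0).
  { split; auto. intros y Cy; split.
    - exists x0; unfold C0 in Cy; apply (PI_sym w Hw); auto.
    - intros y2 H; unfold C0 in *; eapply (PI_trans w Hw); eauto. }
  assert (E1 : Aof w C0 = A0).
  { apply pred_ext; intros x; unfold Aof, A0, C0; split.
    - intros [y [Cy Hy]]; eapply (PI_trans w Hw); eauto; apply (PI_sym w Hw); auto.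
    - intros Ax; exists y0; split; auto; eapply (PI_trans w Hw); [apply (PI_sym w Hw); eauto|]; auto. }
  assert (V2 : valid (tr w) A0).
  { split; auto. intros y Ay; split.
    - exists y0; unfold tr, A0 in *; simpl. eapply (PI_trans w Hw); [apply (PI_sym w Hw); eauto|]; auto.
    - intros y2 H; unfold tr in H; simpl in H; unfold A0 in *; eapply (PI_trans w Hw); eauto. }
  assert (E2 : Aof (tr w) A0 = C0).
  { apply pred_ext; intros x; unfold Aof, A0, C0, tr; simpl; split.
    - intros [y [Ay Hy]]; eapply (PI_trans w Hw); eauto; apply (PI_sym w Hw); auto.
    - intros Cx; exists x0; split; [apply (PI_refl w Hw)|apply (PI_sym w Hw); auto]. }
  assert (P1 : star (star w (Bk C0 A0)) w = Bk A0 C0).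
  { rewrite L1v, E1, L2v, E2; auto. }
  destruct (Q (Bk C0 A0) (Bk_PI C0 A0 HC HA)) as [Z|Z]; rewrite P1 in Z.
  - exfalso; exact (Bk_neZ A0 C0 HA HC Z).
  - exists A0, C0; auto.
Qed.

Lemma aut_Z {X} (phi : Rel X -> Rel X) : is_aut phi -> phi Zr = Zr.
Proof.
  intros [HP [Hi [Hs Hh]]].
  assert (Hc : PIstar (phi Zr)) by (apply HP, Zr_PI).
  assert (L : forall b, PIstar b -> star (phi Zr) b = phi Zr).
  { intros b Hb. destruct (Hs b Hb) as [b0 [Hb0 <-]]. rewrite <- Hh, star_Z_l; auto; apply Zr_PI. }
  rewrite <- (L Zr Zr_PI). apply star_Z_r; auto.
Qed.

Lemma aut_inv {X} (phi : Rel X -> Rel X) : is_aut phi ->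
  exists phi', is_aut phi' /\ (forall a, PIstar a -> phi' (phi a) = a) /\ (forall b, PIstar b -> phi (phi' b) = b).
Proof.
  intros Hphi. pose proof Hphi as [HP [Hi [Hs Hh]]].
  set (phi' := fun b => epsilon (inhabits Zr) (fun a => PIstar a /\ phi a = b)).
  assert (Sp : forall b, PIstar b -> PIstar (phi' b) /\ phi (phi' b) = b).
  { intros b Hb. apply (epsilon_spec (inhabits Zr) (fun a => PIstar a /\ phi a = b)). auto. }
  assert (I1 : forall a, PIstar a -> phi' (phi a) = a).
  { intros a Ha. destruct (Sp (phi a) (HP a Ha)) as [H1 H2]. apply Hi; auto. }
  exists phi'; split; [|split; [auto|intros b Hb; apply Sp; auto]].
  split; [|split; [|split]].
  - intros a Ha; apply Sp; auto.
  - intros a b Ha Hb E. rewrite <- (proj2 (Sp a Ha)), <- (proj2 (Sp b Hb)), E; auto.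
  - intros b Hb. exists (phi b); split; auto.
  - intros a b Ha Hb. destruct (Sp a Ha) as [Pa Ea]; destruct (Sp b Hb) as [Pb Eb].
    transitivity (phi' (phi (star (phi' a) (phi' b)))).
    + rewrite Hh, Ea, Eb; auto.
    + apply I1; apply star_PI; auto.
Qed.

Lemma aut_S {X} (phi : Rel X -> Rel X) a : is_aut phi -> SS a -> SS (phi a).
Proof.
  intros Hphi Sa. pose proof Hphi as [HP [Hi [Hs Hh]]].
  assert (Ha : PIstar a) by (apply S_PI; auto).
  apply Q_S; [apply HP; auto|]. destruct (S_Q a Sa) as [N Q]. split.
  - intros E. apply N, Hi; auto; [apply Zr_PI|]. rewrite E, aut_Z; auto.
  - intros b Hb. destruct (Hs b Hb) as [b0 [Hb0 <-]].
    rewrite <- Hh, <- Hh; auto; [|apply star_PI; auto].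
    destruct (Q b0 Hb0) as [E|E]; rewrite E; [left; apply aut_Z; auto|right; auto].
Qed.

Lemma aut_sig {X} (phi : Rel X -> Rel X) C : is_aut phi -> ne C -> exists C', ne C' /\ phi (Bk C C) = Bk C' C'.
Proof.
  intros Hphi HC. pose proof Hphi as [HP [Hi [Hs Hh]]].
  destruct (aut_S phi (Bk C C) Hphi) as [A' [C' [HA' [HC' E]]]]; [exists C, C; auto|].
  pose proof (star_BkBk C C C HC HC HC) as B.
  apply (f_equal phi) in B; rewrite Hh in B by (apply Bk_PI; auto). rewrite E in B.
  destruct (star_nZ (Bk A' C') A' C') as [V _]; auto; [apply Bk_PI; auto| rewrite B; apply Bk_neZ; auto|].
  apply valid_Bk in V; auto. subst; exists C'; auto.
Qed.

Lemma right_part {X} (phi : Rel X -> Rel X) A C C1 : is_aut phi -> ne A -> ne C -> ne C1 ->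
  phi (Bk C C) = Bk C1 C1 -> exists A2, ne A2 /\ phi (Bk A C) = Bk A2 C1.
Proof.
  intros Hphi HA HC HC1 EC. pose proof Hphi as [HP [Hi [Hs Hh]]].
  destruct (aut_S phi (Bk A C) Hphi) as [A2 [C2 [HA2 [HC2 E]]]]; [exists A, C; auto|].
  pose proof (star_BkBk A C C HA HC HC) as B.
  apply (f_equal phi) in B; rewrite Hh in B by (apply Bk_PI; auto). rewrite E, EC in B.
  destruct (star_nZ (Bk A2 C2) C1 C1) as [V _]; auto; [apply Bk_PI; auto| rewrite B; apply Bk_neZ; auto|].
  apply valid_Bk in V; auto. subst; exists A2; auto.
Qed.

Lemma BR {X} (phi : Rel X -> Rel X) A C A1 C1 : is_aut phi -> ne A -> ne C -> ne A1 -> ne C1 ->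
  phi (Bk A A) = Bk A1 A1 -> phi (Bk C C) = Bk C1 C1 -> phi (Bk A C) = Bk A1 C1.
Proof.
  intros Hphi HA HC HA1 HC1 EA EC. pose proof Hphi as [HP [Hi [Hs Hh]]].
  destruct (right_part phi A C C1) as [A2 [HA2 E2]]; auto.
  destruct (right_part phi C A A1) as [C3 [HC3 E3]]; auto.
  pose proof (star_BkBk A C A HA HC HA) as B.
  apply (f_equal phi) in B; rewrite Hh in B by (apply Bk_PI; auto). rewrite E2, E3, EA in B.
  destruct (star_nZ (Bk A2 C1) C3 A1) as [V E]; auto; [apply Bk_PI; auto| rewrite B; apply Bk_neZ; auto|].
  apply valid_Bk in V; auto. subst C3. rewrite Aof_Bk in E; auto. rewrite B in E.
  apply Bk_inj in E; auto. destruct E as [-> _]. auto.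
Qed.


Definition Sub {X} (D C : X -> Prop) : Prop :=
  D = C \/ exists z E, PIstar z /\ ne E /\
    (forall F, ne F -> star z (Bk F F) <> Zr -> F = C \/ F = D \/ F = E) /\
    star z (Bk D D) = Bk E D /\ star z (Bk E E) = Bk D E /\ D <> E.

Lemma valid_union {X} (z : Rel X) F1 F2 : valid z F1 -> valid z F2 -> valid z (fun y => F1 y \/ F2 y).
Proof.
  intros [[y1 H1] V1] [_ V2]; split; [exists y1; auto|].
  intros y [Hy|Hy]; [destruct (V1 y Hy) as [A B]|destruct (V2 y Hy) as [A B]]; split; auto.
Qed.

Lemma Aof_ne {X} (z : Rel X) C : PIstar z -> valid z C -> ne (Aof z C).
Proof.
  intros Hz [[y Hy] V]. destruct (proj1 (V y Hy)) as [x Hx]. exists x, y; split; auto. apply PI_sym; auto.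
Qed.

Lemma star_Bk_Aof {X} (z : Rel X) D E : PIstar z -> ne D -> ne E -> star z (Bk D D) = Bk E D ->
  valid z D /\ Aof z D = E.
Proof.
  intros Hz HD HE H. destruct (star_nZ z D D Hz HD HD) as [V E2]; [rewrite H; apply Bk_neZ; auto|].
  split; auto. rewrite H in E2. symmetry in E2. apply Bk_inj in E2; auto; [tauto|apply Aof_ne; auto].
Qed.

Lemma Sub_sound {X} (D C : X -> Prop) : ne D -> ne C -> Sub D C -> forall x, D x -> C x.
Proof.
  intros HD HC [E|[z [E [Hz [HE [HF [H1 [H2 N]]]]]]]]; [subst; auto|].
  destruct (star_Bk_Aof z D E Hz HD HE H1) as [VD AD].
  destruct (star_Bk_Aof z E D Hz HE HD H2) as [VE AE].
  pose proof (valid_union z D E VD VE) as VU.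
  assert (HU : ne (fun y => D y \/ E y)) by (destruct HD as [d Hd]; exists d; auto).
  destruct (HF _ HU) as [U|[U|U]].
  - rewrite L1v; auto. apply Bk_neZ; auto. apply Aof_ne; auto.
  - intros x Dx. rewrite <- U; auto.
  - exfalso; apply N. apply pred_ext; intros x; split.
    + intros Dx. rewrite <- AE in Dx. destruct Dx as [y [Ey Hy]].
      assert (Dy : D y) by (rewrite <- U; auto). rewrite <- AD. exists y; auto.
    + intros Ex. rewrite <- U; auto.
  - exfalso; apply N. apply pred_ext; intros x; split.
    + intros Dx. rewrite <- U; auto.
    + intros Ex. rewrite <- AD in Ex. destruct Ex as [y [Dy Hy]].
      assert (Ey : E y) by (rewrite <- U; auto). rewrite <- AE. exists y; auto.
Qed.

Definition Sw {X} (D E : X -> Prop) : Rel X :=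
  fun u v => u = v \/ (inB D E u /\ inB D E v) \/ (inB E D u /\ inB E D v).

Lemma Sw_comm {X} (D E : X -> Prop) : Sw D E = Sw E D.
Proof. apply rel_ext; intros u v; unfold Sw; tauto. Qed.

Lemma Sw_PI {X} (D E : X -> Prop) : ne D -> ne E -> (forall x, D x -> E x -> False) -> PIstar (Sw D E).
Proof.
  intros [d Hd] [e He] Dis.
  assert (NB : forall v, inB D E v -> inB E D v -> False) by (intros [x|y]; simpl; eauto).
  split; [split|].
  - intros u; left; auto.
  - intros u v w [E1|[[H1 H2]|[H1 H2]]] [E2|[[H3 H4]|[H3 H4]]]; subst; unfold Sw; auto;
      try (right; left; auto; fail); try (right; right; auto; fail); exfalso; eauto.
  - intros u v [E1|[[H1 H2]|[H1 H2]]]; [left; auto|right; left; auto|right; right; auto].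
  - intros u. destruct (classic (inB D E u)) as [I|I]; [right|].
    { split; [exists d|exists e]; right; left; split; auto. }
    destruct (classic (inB E D u)) as [I2|I2]; [right|left].
    { split; [exists e|exists d]; right; right; split; auto. }
    intros v [E1|[[H1 H2]|[H1 H2]]]; auto; contradiction.
Qed.

Lemma Sw_valid {X} (D E : X -> Prop) : ne D -> ne E -> (forall x, D x -> E x -> False) ->
  valid (Sw D E) D /\ Aof (Sw D E) D = E.
Proof.
  intros HD [e He] Dis. split.
  - split; auto. intros y Dy; split.
    + exists e; right; right; simpl; auto.
    + intros y2 [E1|[[H1 H2]|[H1 H2]]]; [inversion E1; subst; auto|simpl in *; exfalso; eauto|auto].
  - apply pred_ext; intros x; split.
    + intros [y [Dy [E1|[[H1 H2]|[H1 H2]]]]]; [discriminate|simpl in *; exfalso; eauto|auto].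
    + intros Ex. destruct HD as [d Hd]. exists d; split; auto. right; right; simpl; auto.
Qed.

Lemma Sub_complete {X} (D C : X -> Prop) : ne D -> ne C -> (forall x, D x -> C x) -> Sub D C.
Proof.
  intros HD HC Inc. destruct (classic (D = C)) as [Eq|Neq]; [left; auto|right].
  set (E := fun x => C x /\ ~ D x).
  assert (HE : ne E).
  { apply NNPP; intros N. apply Neq, pred_ext; intros x; split; auto.
    intros Cx; apply NNPP; intros ND; apply N; exists x; split; auto. }
  assert (Dis : forall x, D x -> E x -> False) by (intros x H1 [_ H2]; auto).
  assert (Dis' : forall x, E x -> D x -> False) by eauto.
  exists (Sw D E), E. split; [apply Sw_PI; auto|split; [auto|split; [|split; [|split]]]].
  - intros F HF N.
    assert (V : valid (Sw D E) F).
    { apply NNPP; intros V; apply N, L1i; auto; apply Sw_PI; auto. }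
    destruct V as [_ V].
    assert (Fin : forall y, F y -> D y \/ E y).
    { intros y Fy. destruct (proj1 (V y Fy)) as [x [E1|[[H1 H2]|[H1 H2]]]]; [discriminate|simpl in *; auto|simpl in *; auto]. }
    assert (FD : forall y, F y -> D y -> forall y2, D y2 -> F y2).
    { intros y Fy Dy y2 Dy2. apply (proj2 (V y Fy)). right; right; simpl; auto. }
    assert (FE : forall y, F y -> E y -> forall y2, E y2 -> F y2).
    { intros y Fy Ey y2 Ey2. apply (proj2 (V y Fy)). right; left; simpl; auto. }
    destruct (classic (exists y, F y /\ D y)) as [[y1 [F1 D1]]|ND];
    destruct (classic (exists y, F y /\ E y)) as [[y2 [F2 E2]]|NE].
    + left. apply pred_ext; intros x; split.
      * intros Fx; destruct (Fin x Fx) as [H|[H _]]; auto.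
      * intros Cx. destruct (classic (D x)) as [Dx|Dx]; [apply (FD y1 F1 D1); auto|apply (FE y2 F2 E2); split; auto].
    + right; left. apply pred_ext; intros x; split.
      * intros Fx; destruct (Fin x Fx) as [H|H]; auto. exfalso; apply NE; eauto.
      * intros Dx; apply (FD y1 F1 D1); auto.
    + right; right. apply pred_ext; intros x; split.
      * intros Fx; destruct (Fin x Fx) as [H|H]; auto. exfalso; apply ND; eauto.
      * intros Ex; apply (FE y2 F2 E2); auto.
    + exfalso. destruct HF as [y Fy]. destruct (Fin y Fy); [apply ND|apply NE]; eauto.
  - destruct (Sw_valid D E HD HE Dis) as [V A]. rewrite L1v, A; auto. apply Sw_PI; auto.
  - destruct (Sw_valid E D HE HD Dis') as [V A]. rewrite Sw_comm. rewrite L1v, A; auto. apply Sw_PI; auto.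
  - intros Eq. destruct HD as [d Hd]. assert (E d) by (rewrite <- Eq; auto). eapply Dis; eauto.
Qed.

Lemma Sub_iff {X} (D C : X -> Prop) : ne D -> ne C -> (Sub D C <-> forall x, D x -> C x).
Proof. intros; split; [apply Sub_sound; auto|apply Sub_complete; auto]. Qed.


Definition sigm {X} (phi : Rel X -> Rel X) (C : X -> Prop) : X -> Prop :=
  epsilon (inhabits (fun _ : X => True)) (fun C' => ne C' /\ phi (Bk C C) = Bk C' C').

Lemma sig_spec {X} (phi : Rel X -> Rel X) C : is_aut phi -> ne C ->
  ne (sigm phi C) /\ phi (Bk C C) = Bk (sigm phi C) (sigm phi C).
Proof.
  intros H HC. apply (epsilon_spec (inhabits (fun _ : X => True)) (fun C' => ne C' /\ phi (Bk C C) = Bk C' C')).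
  apply aut_sig; auto.
Qed.

Lemma sig_BR {X} (phi : Rel X -> Rel X) A C : is_aut phi -> ne A -> ne C ->
  phi (Bk A C) = Bk (sigm phi A) (sigm phi C).
Proof.
  intros H HA HC. destruct (sig_spec phi A H HA); destruct (sig_spec phi C H HC). apply BR; auto.
Qed.

Lemma sig_inv {X} (phi phi' : Rel X -> Rel X) C : is_aut phi -> is_aut phi' ->
  (forall a, PIstar a -> phi' (phi a) = a) -> ne C -> sigm phi' (sigm phi C) = C.
Proof.
  intros H H' I HC. destruct (sig_spec phi C H HC) as [N1 E1].
  destruct (sig_spec phi' (sigm phi C) H' N1) as [N2 E2].
  rewrite <- E1, I in E2 by (apply Bk_PI; auto). symmetry in E2. apply Bk_inj in E2; tauto.
Qed.

Lemma Sub_transport {X} (phi phi' : Rel X -> Rel X) D C : is_aut phi -> is_aut phi' ->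
  (forall a, PIstar a -> phi' (phi a) = a) -> (forall b, PIstar b -> phi (phi' b) = b) ->
  ne D -> ne C -> Sub D C -> Sub (sigm phi D) (sigm phi C).
Proof.
  intros H H' I1 I2 HD HC [Eq|[z [E [Hz [HE [HF [H1 [H2 N]]]]]]]]; [left; subst; auto|right].
  pose proof H as [HP [Hi [Hs Hh]]].
  assert (Zz : phi Zr = Zr) by (apply aut_Z; auto).
  exists (phi z), (sigm phi E). split; [auto|split; [apply sig_spec; auto|split; [|split; [|split]]]].
  - intros F HFn NZ.
    set (F0 := sigm phi' F).
    assert (HF0 : ne F0) by (apply sig_spec; auto).
    assert (EF : sigm phi F0 = F) by (apply sig_inv with (phi' := phi); auto).
    assert (EB : Bk F F = phi (Bk F0 F0)) by (rewrite (proj2 (sig_spec phi F0 H HF0)), EF; auto).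
    rewrite EB, <- Hh in NZ by (auto; apply Bk_PI; auto).
    assert (NZ0 : star z (Bk F0 F0) <> Zr) by (intros E0; apply NZ; rewrite E0; auto).
    destruct (HF F0 HF0 NZ0) as [E0|[E0|E0]]; rewrite <- EF, E0; auto.
  - rewrite <- (proj2 (sig_spec phi D H HD)), <- Hh, H1 by (auto; apply Bk_PI; auto).
    apply sig_BR; auto.
  - rewrite <- (proj2 (sig_spec phi E H HE)), <- Hh, H2 by (auto; apply Bk_PI; auto).
    apply sig_BR; auto.
  - intros Eq. apply N. rewrite <- (sig_inv phi phi' D), <- (sig_inv phi phi' E), Eq; auto.
Qed.

Definition sng {X} (y : X) : X -> Prop := fun w => w = y.

Lemma sng_ne {X} (y : X) : ne (sng y).
Proof. exists y; reflexivity. Qed.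

Lemma sng_inj {X} (a b : X) : sng a = sng b -> a = b.
Proof. intros E. change (sng b a). rewrite <- E. reflexivity. Qed.

Lemma sig_sng {X} (phi phi' : Rel X -> Rel X) y : is_aut phi -> is_aut phi' ->
  (forall a, PIstar a -> phi' (phi a) = a) -> (forall b, PIstar b -> phi (phi' b) = b) ->
  exists t, sigm phi (sng y) = sng t.
Proof.
  intros H H' I1 I2.
  destruct (sig_spec phi (sng y) H (sng_ne y)) as [[t Ht] _].
  exists t. set (T := sigm phi (sng y)).
  assert (HT : ne T) by (exists t; auto).
  assert (S1 : Sub (sng t) T) by (apply Sub_complete; auto; [apply sng_ne|intros w Hw; unfold sng in Hw; subst; auto]).
  apply (Sub_transport phi' phi) in S1; auto; [|apply sng_ne].
  assert (ET : sigm phi' T = sng y) by (apply sig_inv; auto; apply sng_ne).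
  rewrite ET in S1.
  assert (N1 : ne (sigm phi' (sng t))) by (apply sig_spec; auto; apply sng_ne).
  pose proof (Sub_sound _ _ N1 (sng_ne y) S1) as Inc.
  assert (E1 : sigm phi' (sng t) = sng y).
  { apply pred_ext; intros w; split; [apply Inc|]. intros Hw; unfold sng in Hw; subst.
    destruct N1 as [w0 Hw0]. pose proof (Inc w0 Hw0) as E0; unfold sng in E0; subst; auto. }
  unfold T; rewrite <- E1. apply sig_inv; auto. apply sng_ne.
Qed.

Definition piF {X} (phi : Rel X -> Rel X) (y : X) : X :=
  epsilon (inhabits y) (fun t => sigm phi (sng y) = sng t).

Lemma piF_spec {X} (phi phi' : Rel X -> Rel X) y : is_aut phi -> is_aut phi' ->
  (forall a, PIstar a -> phi' (phi a) = a) -> (forall b, PIstar b -> phi (phi' b) = b) ->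
  sigm phi (sng y) = sng (piF phi y).
Proof.
  intros. apply (epsilon_spec (inhabits y) (fun t => sigm phi (sng y) = sng t)). eapply sig_sng; eauto.
Qed.

Lemma piF_inv {X} (phi phi' : Rel X -> Rel X) y : is_aut phi -> is_aut phi' ->
  (forall a, PIstar a -> phi' (phi a) = a) -> (forall b, PIstar b -> phi (phi' b) = b) ->
  piF phi' (piF phi y) = y.
Proof.
  intros H H' I1 I2. apply sng_inj.
  rewrite <- (piF_spec phi' phi), <- (piF_spec phi phi'); auto. apply sig_inv; auto. apply sng_ne.
Qed.

Lemma sig_char {X} (phi phi' : Rel X -> Rel X) C : is_aut phi -> is_aut phi' ->
  (forall a, PIstar a -> phi' (phi a) = a) -> (forall b, PIstar b -> phi (phi' b) = b) ->
  ne C -> sigm phi C = fun w => C (piF phi' w).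
Proof.
  intros H H' I1 I2 HC. assert (HS : ne (sigm phi C)) by (apply sig_spec; auto).
  apply pred_ext; intros w.
  assert (Ew : sng w = sigm phi (sng (piF phi' w))).
  { rewrite (piF_spec phi phi'), (piF_inv phi' phi); auto. }
  assert (K : sigm phi C w <-> Sub (sng w) (sigm phi C)).
  { rewrite Sub_iff; [|apply sng_ne|auto].
    split; [intros Hw x Hx; unfold sng in Hx; subst; auto|intros Hs; apply Hs; reflexivity]. }
  rewrite K. split.
  - intros Sb. rewrite Ew in Sb. apply (Sub_transport phi' phi) in Sb; auto; [|apply sig_spec; auto; apply sng_ne].
    rewrite (sig_inv phi phi' (sng (piF phi' w))), (sig_inv phi phi' C) in Sb; auto; [|apply sng_ne].
    exact (Sub_sound _ _ (sng_ne _) HC Sb (piF phi' w) eq_refl).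
  - intros Cw. rewrite Ew. apply Sub_transport with (phi' := phi'); auto; [apply sng_ne|].
    apply Sub_complete; auto; [apply sng_ne|]. intros x Hx; unfold sng in Hx; subst; auto.
Qed.


Lemma DL_core {X} (b c : Rel X) : PIstar b -> PIstar c ->
  (forall C, ne C -> valid b C -> valid c C) -> (forall C, ne C -> valid c C -> valid b C) ->
  (forall C, ne C -> valid b C -> Aof b C = Aof c C) ->
  forall x y, b (inl x) (inr y) -> c (inl x) (inr y).
Proof.
  intros Hb Hc V1 V2 EA x y H.
  set (C := fun y2 => b (inr y) (inr y2)).
  assert (HC : ne C) by (exists y; apply (PI_refl b Hb)).
  assert (VC : valid b C).
  { split; auto. intros y2 Cy2; split.
    - exists x. unfold C in Cy2. eapply (PI_trans b Hb); [apply (PI_sym b Hb); eauto|]. apply (PI_sym b Hb); auto.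
    - intros y3 H3; unfold C in *; eapply (PI_trans b Hb); eauto. }
  assert (Ax : Aof c C x) by (rewrite <- EA; auto; exists y; split; auto; apply (PI_refl b Hb)).
  destruct Ax as [y3 [Cy3 H3]].
  set (C' := fun w => c (inr y) (inr w)).
  assert (HC' : ne C') by (exists y; apply (PI_refl c Hc)).
  assert (Vc : valid c C) by auto.
  assert (VC' : valid c C').
  { split; auto. intros w Hw; split.
    - destruct (proj1 (proj2 Vc y (PI_refl b Hb _))) as [x' Hx'].
      exists x'. eapply (PI_trans c Hc); [apply (PI_sym c Hc); exact Hw|]. auto.
    - intros w2 H2; unfold C' in *; eapply (PI_trans c Hc); eauto. }
  assert (VbC' : valid b C') by auto.
  assert (C'y3 : C' y3).
  { apply (proj2 (proj2 VbC' y (PI_refl c Hc _))). exact Cy3. }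
  unfold C' in C'y3. eapply (PI_trans c Hc); eauto. apply (PI_sym c Hc); auto.
Qed.

Lemma DL1 {X} (b c : Rel X) : PIstar b -> PIstar c ->
  (forall C, ne C -> valid b C -> valid c C) -> (forall C, ne C -> valid c C -> valid b C) ->
  (forall C, ne C -> valid b C -> Aof b C = Aof c C) ->
  forall u v, b u v -> c u v.
Proof.
  intros Hb Hc V1 V2 EA u v H.
  destruct (classic (u = v)) as [E|N]; [subst; apply (PI_refl c Hc)|].
  destruct (PI_meet2 b Hb u v H N) as [[x Hx] [y Hy]].
  assert (Bxy : b (inl x) (inr y)) by (eapply (PI_trans b Hb); [apply (PI_sym b Hb); eauto|]; auto).
  assert (K : forall w, b w (inl x) -> c w (inl x)).
  { intros [x1|y1] Hw.
    - assert (c (inl x1) (inr y)) by (apply (DL_core b c); auto; eapply (PI_trans b Hb); eauto).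
      assert (c (inl x) (inr y)) by (apply (DL_core b c); auto).
      eapply (PI_trans c Hc); eauto. apply (PI_sym c Hc); auto.
    - apply (PI_sym c Hc). apply (DL_core b c); auto. apply (PI_sym b Hb); auto. }
  eapply (PI_trans c Hc); [apply K; eauto|]. apply (PI_sym c Hc). apply K.
  eapply (PI_trans b Hb); [apply (PI_sym b Hb); eauto|]; auto.
Qed.

Lemma DL {X} (b c : Rel X) : PIstar b -> PIstar c ->
  (forall C, ne C -> (valid b C <-> valid c C)) ->
  (forall C, ne C -> valid b C -> Aof b C = Aof c C) -> b = c.
Proof.
  intros Hb Hc V EA. apply rel_ext; intros u v; split; apply DL1; auto; try (intros C HC; apply V; auto; fail).
  intros C HC Vc. symmetry; apply EA; auto; apply V; auto.
Qed.

Lemma valid_conj {X} (f g : X -> X) (a : Rel X) C : (forall x, g (f x) = x) -> (forall x, f (g x) = x) ->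
  (valid (cnj g a) C <-> valid a (fun y => C (f y))).
Proof.
  intros Hgf Hfg; unfold valid, cnj, ne; simpl; split.
  - intros [[y0 H0] V]; split; [exists (g y0); rewrite Hfg; auto|].
    intros y Cy. destruct (V (f y) Cy) as [[x Hx] V2]. rewrite Hgf in Hx, V2. split.
    + exists (g x); auto.
    + intros y2 H2. apply V2. rewrite Hgf; auto.
  - intros [[y0 H0] V]; split; [exists (f y0); auto|].
    intros y Cy. rewrite <- (Hfg y) in Cy. destruct (V (g y) Cy) as [[x Hx] V2]. split.
    + exists (f x); rewrite Hgf; auto.
    + intros y2 H2. rewrite <- (Hfg y2). apply V2; auto.
Qed.

Lemma Aof_conj {X} (f g : X -> X) (a : Rel X) C : (forall x, g (f x) = x) -> (forall x, f (g x) = x) ->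
  Aof (cnj g a) C = fun w => Aof a (fun y => C (f y)) (g w).
Proof.
  intros Hgf Hfg; apply pred_ext; intros w; unfold Aof, cnj; simpl; split.
  - intros [y [Cy H]]; exists (g y); rewrite Hfg; auto.
  - intros [y [Cy H]]; exists (f y); rewrite Hgf; auto.
Qed.

Lemma part2 {X} (phi : Rel X -> Rel X) : is_aut phi ->
  exists f g : X -> X, (forall x, g (f x) = x) /\ (forall x, f (g x) = x) /\
    forall a, PIstar a -> phi a = cnj g a.
Proof.
  intros H. destruct (aut_inv phi H) as [phi' [H' [I1 I2]]].
  pose proof H as [HP [Hi [Hs Hh]]].
  set (f := piF phi). set (g := piF phi').
  assert (Hgf : forall x, g (f x) = x) by (intros; apply piF_inv with (phi' := phi'); auto).
  assert (Hfg : forall x, f (g x) = x) by (intros; apply piF_inv with (phi' := phi); auto).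
  exists f, g; split; [auto|split; [auto|]].
  intros a Ha. assert (Hb : PIstar (phi a)) by auto.
  assert (Hc : PIstar (cnj g a)) by (apply conj_PI with (g := f); auto).
  assert (Zz : phi Zr = Zr) by (apply aut_Z; auto).
  assert (KEY : forall C, ne C ->
    (valid (phi a) C <-> valid a (fun y => C (f y))) /\
    (valid (phi a) C -> Aof (phi a) C = fun w => Aof a (fun y => C (f y)) (g w))).
  { intros C HC. set (C0 := fun y => C (f y)).
    assert (HC0 : ne C0) by (destruct HC as [y Hy]; exists (g y); unfold C0; rewrite Hfg; auto).
    assert (SC0 : sigm phi C0 = C).
    { rewrite (sig_char phi phi'); auto. apply pred_ext; intros w; unfold C0; rewrite Hfg; tauto. }
    assert (EB : Bk C C = phi (Bk C0 C0)) by (rewrite (proj2 (sig_spec phi C0 H HC0)), SC0; auto).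
    assert (EP : star (phi a) (Bk C C) = phi (star a (Bk C0 C0))) by (rewrite EB, Hh; auto; apply Bk_PI; auto).
    destruct (classic (valid a C0)) as [V|V].
    - assert (E1 : star a (Bk C0 C0) = Bk (Aof a C0) C0) by (apply L1v; auto).
      assert (HA : ne (Aof a C0)) by (apply Aof_ne; auto).
      rewrite E1, (sig_BR phi (Aof a C0) C0 H HA HC0), SC0 in EP.
      destruct (star_nZ (phi a) C C Hb HC HC) as [Vb Eb]; [rewrite EP; apply Bk_neZ; auto; apply sig_spec; auto|].
      split; [tauto|]. intros _. rewrite EP in Eb. apply Bk_inj in Eb; auto;
        try (apply sig_spec; auto; fail); try (apply Aof_ne; auto; fail).
      destruct Eb as [Eb _]. rewrite <- Eb, (sig_char phi phi'); auto.
    - assert (E1 : star a (Bk C0 C0) = Zr) by (apply L1i; auto).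
      rewrite E1, Zz in EP.
      assert (Vb : ~ valid (phi a) C).
      { intros Vb. rewrite L1v in EP; auto. eapply Bk_neZ; [| |exact EP]; auto. apply Aof_ne; auto. }
      tauto. }
  apply DL; auto.
  - intros C HC. rewrite (valid_conj f g); auto. apply KEY; auto.
  - intros C HC V. rewrite (Aof_conj f g); auto. apply KEY; auto.
Qed.


Definition pf {X} (p : Rel X) (x : X) : X := epsilon (inhabits x) (fun y => p (inl x) (inr y)).

Lemma pf_perm {X} (f : X -> X) : pf (perm_rel f) = f.
Proof.
  apply functional_extensionality; intros x. unfold pf.
  assert (K : forall y, perm_rel f (inl x) (inr y) <-> y = f x).
  { intros y; split.
    - intros [E|[x0 [[E1 E2]|[E1 E2]]]]; [discriminate| |discriminate]. inversion E1; inversion E2; subst; auto.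
    - intros ->; right; exists x; left; auto. }
  apply K. apply (epsilon_spec (inhabits x) (fun y => perm_rel f (inl x) (inr y))). exists (f x); apply K; auto.
Qed.

Definition Psi {X} (p : Rel X) (a : Rel X) : Rel X := cnj (pf p) a.

Lemma conj_aut {X} (f g : X -> X) : (forall x, g (f x) = x) -> (forall x, f (g x) = x) -> is_aut (cnj f).
Proof.
  intros Hgf Hfg; split; [|split; [|split]].
  - intros a Ha; apply conj_PI with (g := g); auto.
  - intros a b Ha Hb E. rewrite <- (conj_conj g f a), <- (conj_conj g f b), E; auto.
  - intros b Hb. exists (cnj g b); split; [apply conj_PI with (g := f); auto|apply conj_conj; auto].
  - intros a b Ha Hb. symmetry; apply conj_star with (g := g); auto.
Qed.

Lemma perm_comp {X} (f g h k : X -> X) : (forall x, g (f x) = x) -> (forall x, f (g x) = x) ->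
  (forall x, k (h x) = x) -> (forall x, h (k x) = x) ->
  star (perm_rel f) (perm_rel h) = perm_rel (fun x => h (f x)).
Proof.
  intros Hgf Hfg Hkh Hhk.
  rewrite (L3l g f); auto; [|apply (perm_PI k h); auto].
  apply rel_ext; intros u v. unfold lconj.
  rewrite (perm_char k h Hhk Hkh), (perm_char (fun x => g (k x)) (fun x => h (f x))).
  - assert (K : forall w, Pj (fun x => g (k x)) w = g (Pj k (lmap f w))) by (intros [x|y]; simpl; auto).
    rewrite !K. split; intros E; [rewrite E|rewrite <- (Hfg (Pj k (lmap f u))), <- (Hfg (Pj k (lmap f v))), E]; auto.
  - intros x; rewrite Hfg, Hhk; auto.
  - intros x; rewrite Hkh, Hgf; auto.
Qed.

Theorem mainTheorem15 (X : Type) :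
  (exists Psi : Rel X -> (Rel X -> Rel X),
      (forall p, in_SX p -> is_aut (Psi p)) /\
      (forall p q, in_SX p -> in_SX q ->
         agree_on_PI (Psi (star p q)) (fun a => Psi p (Psi q a))) /\
      (forall p q, in_SX p -> in_SX q -> agree_on_PI (Psi p) (Psi q) -> p = q) /\
      (forall phi, is_aut phi -> exists p, in_SX p /\ agree_on_PI phi (Psi p)))
  /\
  (forall phi : Rel X -> Rel X, is_aut phi ->
     exists f g : X -> X,
       (forall x, g (f x) = x) /\ (forall x, f (g x) = x) /\
       forall a, PIstar a ->
         phi a = star (star (perm_rel g) a) (perm_rel f)).
Proof.
  split.
  - exists Psi. split; [|split; [|split]].
    + intros p [f [g [Hgf [Hfg ->]]]]. unfold Psi; rewrite pf_perm. apply conj_aut with (g := g); auto.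
    + intros p q [f [g [Hgf [Hfg ->]]]] [h [k [Hkh [Hhk ->]]]] a Ha. unfold Psi.
      rewrite (perm_comp f g h k), !pf_perm; auto. apply conj_comp.
    + intros p q [f [g [Hgf [Hfg ->]]]] [h [k [Hkh [Hhk ->]]]] Ag. unfold Psi in Ag; rewrite !pf_perm in Ag.
      f_equal. apply functional_extensionality; intros x.
      assert (HP : PIstar (Bk (sng (f x)) (sng (f x)))) by (apply Bk_PI; apply sng_ne).
      pose proof (Ag _ HP) as E.
      assert (H1 : cnj f (Bk (sng (f x)) (sng (f x))) (inl x) (inr x)) by (right; split; reflexivity).
      rewrite E in H1. destruct H1 as [H1|[H1 _]]; [discriminate|]. symmetry; exact H1.
    + intros phi Hphi. destruct (part2 phi Hphi) as [f [g [Hgf [Hfg E]]]].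
      exists (perm_rel g); split; [exists g, f; auto|].
      intros a Ha; unfold Psi; rewrite pf_perm; auto.
  - intros phi Hphi. destruct (part2 phi Hphi) as [f [g [Hgf [Hfg E]]]].
    exists f, g; split; [auto|split; [auto|]]. intros a Ha. rewrite E, L3; auto.
Qed.
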